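(* Let $\kappa$ be a nonzero real constant and $\gamma\in\{1,-1\}$. Let $W(\xi,\eta,\mu)=\sum_{n\ge1}W^{(n)}(\xi,\eta)\,\mu^{-n}$ be the off-diagonal $2\times2$ matrix series appearing in the large-spectral-parameter decomposition of the fundamental solution described in the context, and define the generating function \[ \mathbb Y(\xi,\eta,\lambda;\mu)=\frac{\gamma\kappa}{2i(\lambda-\mu)}\,(\mathbb 1+W(\xi,\eta,\mu))\,\sigma_3\,(\mathbb 1+W(\xi,\eta,\mu))^{-1}, \] with matrices $\mathbb Y^{(n)}(\xi,\eta,\lambda)$, $n\ge0$, defined by the large-$\mu$ expansion $\mathbb Y(\xi,\eta,\lambda;\mu)=\kappa\sum_{n=1}^\infty \mathbb Y^{(n-1)}(\xi,\eta,\lambda)\,\mu^{-n}$. Then \[ \mathbb Y^{(0)}(\xi,\eta,\lambda)=\frac{i\gamma}{2}\sigma_3, \] and for all $n\ge1$, \[ \mathbb Y^{(n)}(\xi,\eta,\lambda)=\lambda\,\mathbb Y^{(n-1)}(\xi,\eta,\lambda)+i\gamma\,\sigma_3\sum_{j=1}^n(-1)^j\sum_{\substack{m_1+\dots+m_j=n\\ m_1,\dots,m_j\ge1}}W^{(m_1)}\cdots W^{(m_j)}, \] where the inner sum runs over all ordered decompositions of $n$ into $j$ positive integers.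
   Context: Setting: $\mathbb X(\xi,\eta,\lambda)$ is a $2\times2$ matrix that is a polynomial of degree $N$ in the spectral parameter $\lambda$, with $\mathrm{Tr}\,\mathbb X=0$ and $\overline{\mathbb X(\xi,\eta,\bar\lambda)}=\sigma\,\mathbb X(\xi,\eta,\lambda)\,\sigma$, where $\sigma=\sigma_1$ if $\kappa>0$ and $\sigma=\sigma_2$ if $\kappa<0$; $\sigma_1,\sigma_2,\sigma_3$ are the Pauli matrices. Periodic boundary conditions are imposed in $\xi\in[-\Lambda,\Lambda]$. Let $\mathbb T(\xi,\zeta,\lambda)$ be the fundamental solution of $\partial_\xi\Psi=\mathbb X\Psi$ normalized by $\mathbb T(\xi,\xi,\lambda)=\mathbb 1$. For large $\lambda$ it is written as $\mathbb T(\xi,\zeta,\lambda)=(\mathbb 1+W(\xi,\lambda))e^{Z(\xi,\zeta,\lambda)}(\mathbb 1+W(\zeta,\lambda))^{-1}$ with $W$ off-diagonal, $W(\xi,\lambda)=\sum_{n\ge1}W^{(n)}(\xi)\lambda^{-n}$, and $Z$ diagonal; the coefficients $W^{(n)}$ (which also depend on the second variable $\eta$) are determined by the matrix Riccati equation $W_\xi=\mathbb X_dW-W\mathbb X_d+\mathbb X_o-W\mathbb X_oW$, where $\mathbb X_d$, $\mathbb X_o$ are the diagonal and off-diagonal parts of $\mathbb X$. Expansions in $\mu$ are understood as formal large-$\mu$ expansions. *)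

(* Defs.v *)
From HB Require Import structures.
From mathcomp Require Import all_boot all_order all_algebra.
From mathcomp Require Import complex.
Set Implicit Arguments. Unset Strict Implicit. Unset Printing Implicit Defensive.
Import Order.TTheory GRing.Theory Num.Theory.
Local Open Scope ring_scope.
Local Open Scope complex_scope.

(* Formal power series in x = mu^{-1} with coefficients in 2x2 complex
   matrices are represented by their coefficient sequences  nat -> 'M_2 :
   s represents  \sum_n s n * x^n. *)
Definition mseries (R : rcfType) := nat -> 'M[R[i]]_2.

Definition smul (R : rcfType) (a b : mseries R) : mseries R :=
  fun n => \sum_(k < n.+1) a k * b (n - k)%N.

Definition sone (R : rcfType) : mseries R := fun n => if n == 0%N then 1 else 0.

Definition sigma3 (R : rcfType) : 'M[R[i]]_2 :=
  \matrix_(i < 2, j < 2) (if i == j then (if i == 0 :> nat then 1 else -1) else 0).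

Definition offdiag (R : rcfType) (A : 'M[R[i]]_2) : Prop := forall i, A i i = 0.

(* The series 1 + W(mu) = 1 + \sum_{n>=1} W^{(n)} mu^{-n}, given the coefficients
   Wc n (only n >= 1 are used). *)
Definition oneW (R : rcfType) (Wc : nat -> 'M[R[i]]_2) : mseries R :=
  fun n => if n == 0%N then 1 else Wc n.

(* Large-mu expansion of 1/(lambda - mu) = - \sum_{k>=0} lambda^k mu^{-k-1}. *)
Definition geom (R : rcfType) (lam : R[i]) : nat -> R[i] :=
  fun n => if n == 0%N then 0 else - lam ^+ n.-1.

(* Coefficients of the generating function
     Y(lambda; mu) = gamma kappa / (2 i (lambda - mu)) * (1+W) sigma3 V,
   where V is the (formal) inverse of 1+W:  Ycoef n = coefficient of mu^{-n}. *)
Definition Ycoef (R : rcfType) (gam kap : R) (lam : R[i])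
    (Wc : nat -> 'M[R[i]]_2) (V : mseries R) (n : nat) : 'M[R[i]]_2 :=
  let A := smul (smul (oneW Wc) (fun m => if m == 0%N then sigma3 R else 0)) V in
  ((gam%:C * kap%:C) / (2 * 'i)) *: \sum_(k < n.+1) geom lam k *: A (n - k)%N.

(* Y^{(n)} defined by  Y = kappa \sum_{n>=1} Y^{(n-1)} mu^{-n}. *)
Definition Yn (R : rcfType) (gam kap : R) (lam : R[i])
    (Wc : nat -> 'M[R[i]]_2) (V : mseries R) (n : nat) : 'M[R[i]]_2 :=
  (kap%:C)^-1 *: Ycoef gam kap lam Wc V n.+1.

Definition compsum (R : rcfType) (Wc : nat -> 'M[R[i]]_2) (n j : nat) : 'M[R[i]]_2 :=
  \sum_(m : {ffun 'I_j -> 'I_n.+1} |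
          ((\sum_(i < j) (m i : nat))%N == n) && [forall i, (0 < m i)%N])
    \prod_(i < j) Wc (m i : nat).

(* Main.v *)
Require Import Defs.
From HB Require Import structures.
From mathcomp Require Import all_boot all_order all_algebra.
From mathcomp Require Import complex.
From mathcomp Require Import zify ring.
Set Implicit Arguments. Unset Strict Implicit. Unset Printing Implicit Defensive.
Import Order.TTheory GRing.Theory Num.Theory.
Local Open Scope ring_scope.
Local Open Scope complex_scope.

Section H.
Variable R : rcfType.
Local Notation M := ('M[R[i]]_2).

Lemma anticomm (A : M) : offdiag A -> A * sigma3 R = - (sigma3 R * A).
Proof.
move=> hA.
have h0 : A ord0 ord0 = 0 by apply: hA.
have h1 : A (lift ord0 ord0) (lift ord0 ord0) = 0 by apply: hA.
have E0 : forall h : (0 < 2)%N, Ordinal h = ord0 by move=> h; apply/val_inj.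
have E1 : forall h : (1 < 2)%N, Ordinal h = lift ord0 ord0 by move=> h; apply/val_inj.
apply/matrixP => i j; rewrite -mulmxE !mxE !big_ord_recl !big_ord0 !mxE /=.
case: i => [[|[|//]] hi]; case: j => [[|[|//]] hj];
  rewrite ?E0 ?E1 /= ?h0 ?h1;
  rewrite ?mulr0 ?mul0r ?mulr1 ?mul1r ?mulrN1 ?mulN1r ?addr0 ?add0r ?oppr0 ?opprK //.
Qed.

Lemma prod_mono (I : Type) (r : seq I) (c : I -> M) (e : I -> nat) :
  \prod_(i <- r) ((c i)%:P * 'X^(e i)) =
  (\prod_(i <- r) c i)%:P * 'X^(\sum_(i <- r) e i)%N.
Proof.
elim: r => [|a r IH]; first by rewrite !big_nil mul1r.
rewrite !big_cons IH mulrA -(mulrA (c a)%:P) -commr_polyXn.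
by rewrite mulrA -polyCM -mulrA -exprD.
Qed.

Lemma prod_has0 (I : Type) (r : seq I) (c : I -> M) :
  has (fun i => c i == 0) r -> \prod_(i <- r) c i = 0.
Proof.
elim: r => [//|a r IH] /=; rewrite big_cons.
by case/orP => [/eqP -> | /IH ->]; rewrite ?mul0r ?mulr0.
Qed.

Definition Wp (Wc : nat -> M) (a : nat) : M := if a == 0%N then 0 else Wc a.
Definition wpoly (Wc : nat -> M) (n : nat) : {poly M} := \poly_(a < n.+1) Wp Wc a.

Lemma compsum_coef (Wc : nat -> M) n j :
  compsum Wc n j = ((wpoly Wc n) ^+ j)`_n.
Proof.
rewrite /wpoly poly_def -[X in _ ^+ X](card_ord j) -prodr_const.
rewrite bigA_distr_bigA /= coef_sum.
transitivity (\sum_(f : {ffun 'I_j -> 'I_n.+1} | (\sum_(i<j) (f i:nat))%N == n)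
   \prod_(i<j) Wp Wc (f i)).
  rewrite /compsum [RHS](bigID (fun f : {ffun 'I_j -> 'I_n.+1} => [forall i, (0 < f i)%N])) /=.
  rewrite [X in _ = _ + X]big1 ?addr0.
    apply: eq_bigr => f /andP [_ /forallP hf]; apply: eq_bigr => i _.
    by rewrite /Wp; move: (hf i); rewrite lt0n => /negbTE ->.
  move=> f /andP [_ /forallPn [i hi]]; apply: prod_has0.
  apply/hasP; exists i; first by rewrite mem_index_enum.
  by rewrite /Wp; move: hi; rewrite -eqn0Ngt => ->.
rewrite big_mkcond; apply: eq_bigr => f _.
under eq_bigr do rewrite -mul_polyC.
rewrite prod_mono coefMXn coefC.
case: ltngtP => h; rewrite ?subnn ?eqxx //.
by rewrite (_ : (n - _ == 0)%N = false) //; apply/negbTE; rewrite subn_eq0 -ltnNge.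
by rewrite -h subnn.
Qed.

Lemma geom_tel (x : {poly M}) m : (1 - x) * \sum_(j < m) x ^+ j = 1 - x ^+ m.
Proof.
elim: m => [|m IH]; first by rewrite big_ord0 mulr0 expr0 subrr.
rewrite big_ord_recr /= mulrDr IH mulrBl mul1r exprS.
by rewrite addrA subrK.
Qed.

Lemma wpoly_X (Wc : nat -> M) n : wpoly Wc n = (\poly_(a < n) Wp Wc a.+1) * 'X.
Proof.
apply/polyP => i; rewrite coefMX !coef_poly.
by case: i => [|i] //=; rewrite /Wp /= ltnS.
Qed.

Lemma wpoly_pow0 (Wc : nat -> M) n m k : (k < m)%N -> ((wpoly Wc n) ^+ m)`_k = 0.
Proof.
move=> hk; rewrite wpoly_X exprMn_comm; last exact: commr_polyX.
by rewrite coefMXn hk.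
Qed.

Lemma uniq_rec (o x y : nat -> M) N : o 0%N = 1 ->
  (forall k, (k <= N)%N -> \sum_(i < k.+1) o i * x (k - i)%N = \sum_(i < k.+1) o i * y (k - i)%N) ->
  forall k, (k <= N)%N -> x k = y k.
Proof.
move=> o0 h k; elim: k {-2}k (leqnn k) => [|K IH] k hkK hkN.
  move: (h k hkN); rewrite !big_ord_recl !subn0 o0 !mul1r.
  by move: hkK; rewrite leqn0 => /eqP ->; rewrite !big_ord0 !addr0.
move: (h k hkN); rewrite !big_ord_recl !subn0 o0 !mul1r.
rewrite (eq_bigr (fun i : 'I_k => o (bump 0 i) * y (k - bump 0 i)%N)).
  by move/addIr.
move=> i _; rewrite IH //.
  all: have := ltn_ord i; rewrite /= /bump /=; lia.
Qed.

Lemma coefNX (p : {poly M}) m k : ((- p) ^+ m)`_k = (-1 : R[i]) ^+ m *: (p ^+ m)`_k.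
Proof.
rewrite exprNn -[(-1 : {poly M}) ^+ m]signr_odd -[(-1 : R[i]) ^+ m]signr_odd.
by case: odd; rewrite ?expr0 ?expr1 ?mul1r ?scale1r ?mulN1r ?coefN ?scaleN1r.
Qed.

Lemma V_eq (Wc : nat -> M) (V : mseries R) n : (0 < n)%N ->
  smul (oneW Wc) V = sone R ->
  V n = \sum_(1 <= j < n.+1) (-1) ^+ j *: compsum Wc n j.
Proof.
move=> n0 hV.
set w := wpoly Wc n; set s := \sum_(j < n.+1) (- w) ^+ j.
have e : (1 + w) * s = 1 - (- w) ^+ n.+1 by rewrite -geom_tel opprK.
have Hs : forall k, (k <= n)%N -> \sum_(i < k.+1) oneW Wc i * s`_(k - i) = sone R k.
  move=> k hk.
  have : ((1 + w) * s)`_k = sone R k.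
    by rewrite e coefB coefNX wpoly_pow0 ?scaler0 ?subr0 ?coef1 /sone; [case: (k == 0%N)|].
  rewrite coefM => <-; apply: eq_bigr => i _.
  rewrite coefD coef1 /w /wpoly coef_poly /oneW /Wp.
  have := ltn_ord i => hi.
  rewrite (_ : (i < n.+1)%N); last by apply: leq_trans hi _.
  by case: (i == 0 :> nat); rewrite ?add0r ?addr0.
have Hk : forall k, (k <= n)%N -> V k = s`_k.
  apply: (@uniq_rec (oneW Wc) V (fun k => s`_k) n) => // k hk.
  by rewrite Hs // -hV.
rewrite Hk // /s coef_sum big_ord_recl coefNX expr0 coef1.
rewrite (_ : (n == 0%N) = false); last by rewrite eqn0Ngt n0.
rewrite scaler0 add0r big_add1 /= big_mkord; apply: eq_bigr => j _.
by rewrite coefNX compsum_coef.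
Qed.

Lemma ii_inv : ('i : R[i]) ^-1 = - 'i.
Proof.
apply: (@mulfI _ 'i); first by rewrite neq0Ci.
by rewrite mulfV ?neq0Ci // mulrN mulCii opprK.
Qed.

Lemma C_neq0 (k : R) : k != 0 -> k%:C != 0.
Proof. by move=> hk; rewrite fmorph_eq0. Qed.

Lemma G_rec (lam : R[i]) (A : nat -> M) n :
  \sum_(k < n.+3) geom lam k *: A (n.+2 - k)%N =
  lam *: \sum_(k < n.+2) geom lam k *: A (n.+1 - k)%N - A n.+1.
Proof.
rewrite big_ord_recl [in RHS]big_ord_recl /geom /= !scale0r !add0r.
rewrite big_ord_recl /= expr0 scaleN1r subn1 /= addrC; congr (_ + _).
rewrite scaler_sumr; apply: eq_bigr => k _.
by rewrite /bump /= !add1n !subSS scalerA exprS mulrN.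
Qed.

Lemma A_eq (Wc : nat -> M) (V : mseries R) n : (0 < n)%N ->
  (forall n, (0 < n)%N -> offdiag (Wc n)) ->
  smul (oneW Wc) V = sone R ->
  smul (smul (oneW Wc) (fun m => if m == 0%N then sigma3 R else 0)) V n =
  2%:R *: (sigma3 R * V n).
Proof.
move=> n0 hW hV.
have hS : forall k, smul (oneW Wc) (fun m => if m == 0%N then sigma3 R else 0) k
    = oneW Wc k * sigma3 R.
  move=> k; rewrite /smul big_ord_recr /= subnn eqxx big1 ?add0r // => i _.
  by rewrite subn_eq0 leqNgt ltn_ord /= mulr0.
set s1 := smul (oneW Wc) _; rewrite /smul /s1; under eq_bigr do rewrite hS.
transitivity (\sum_(k < n.+1) ((if k == 0 :> nat then 2%:R *: (sigma3 R * V n) else 0)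
                  - sigma3 R * (oneW Wc k * V (n - k)%N))).
  apply: eq_bigr => k _; rewrite /oneW.
  case: eqP => [->|hk].
    by rewrite subn0 !mul1r scaler_nat mulr2n addrK.
  rewrite add0r anticomm ?mulNr ?mulrA //; apply: hW; rewrite lt0n; exact/eqP.
rewrite sumrB -mulr_sumr (_ : \sum_(i < n.+1) oneW Wc i * V (n - i)%N = 0).
  by rewrite mulr0 subr0 big_ord_recl /= big1 ?addr0.
by move: (congr1 (fun f => f n) hV); rewrite /smul /sone /= => ->; rewrite eqn0Ngt n0.
Qed.
End H.

Unset Implicit Arguments.
Set Strict Implicit.

Theorem mainTheorem2 (R : rcfType) (kap gam : R)
    (W : nat -> R -> R -> 'M[R[i]]_2) (xi eta : R) (lam : R[i])
    (V : mseries R) :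
  kap != 0 ->
  (gam = 1 \/ gam = -1) ->
  (forall n, (0 < n)%N -> offdiag (W n xi eta)) ->
  smul (oneW (fun n => W n xi eta)) V = sone R ->
  smul V (oneW (fun n => W n xi eta)) = sone R ->
  Yn gam kap lam (fun n => W n xi eta) V 0 = ('i * gam%:C / 2) *: sigma3 R /\
  (forall n, (0 < n)%N ->
     Yn gam kap lam (fun n => W n xi eta) V n =
       lam *: Yn gam kap lam (fun n => W n xi eta) V n.-1
       + ('i * gam%:C) *: (sigma3 R *m
           \sum_(1 <= j < n.+1) (-1) ^+ j *: compsum (fun n => W n xi eta) n j)).
Proof.
move=> hk _ hW hV _.
have hk' := C_neq0 hk.
split.
  rewrite /Yn /Ycoef /= !big_ord_recl big_ord0 /geom /= scale0r add0r addr0.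
  have V0 : V 0%N = 1.
    by move: (congr1 (fun f => f 0%N) hV); rewrite /smul /= big_ord1 /oneW /= mul1r.
  rewrite /smul /= !big_ord1 /oneW /= V0 !mul1r mulr1 expr0 scaleN1r.
  rewrite scalerN -scaleNr scalerA; congr (_ *: _).
  rewrite -mulrN1 invfM ii_inv. field. exact: hk'.
move=> [//|m] _; rewrite /Yn /Ycoef /= G_rec A_eq //.
rewrite -(@V_eq _ (fun n => W n xi eta) V m.+1) // mulmxE.
rewrite scalerBr scalerDr !scalerA -scaleNr scalerA.
congr (_ *: _ + _ *: _).
  field. by rewrite neq0Ci hk'.
transitivity (- gam%:C / 'i).
  field. by rewrite neq0Ci hk'.
by rewrite ii_inv mulrN mulNr opprK mulrC.
Qed.
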